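(* Let $A$ be a Hausdorff topological space. Then $+\infty\in P_h(A)$ if and only if $A$ is infinite.
   Context: For a topological space $A$, $Homeo(A)$ denotes the group of all homeomorphisms $A\to A$ under composition. For a subgroup $G$ of $Homeo(A)$ (acting by $gx=g(x)$), a nonempty subset $Y\subseteq A$ is invariant if $g(y)\in Y$ for all $g\in G$, $y\in Y$. The height of $(G,A)$ is $h(G,A)=\sup\{n\geq 0:$ there exist distinct closed invariant subsets $Y_0\subset Y_1\subset\cdots\subset Y_n=A\}$ (possibly $+\infty$). Finally $P_h(A)=\{h(G,A): G \text{ is a subgroup of } Homeo(A)\}$. *)

(* Defs.v *)
From HB Require Import structures.
From mathcomp Require Import all_boot all_order all_algebra.
From mathcomp Require Import all_classical all_reals topology ereal.
From mathcomp Require Import Rstruct.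
Set Implicit Arguments. Unset Strict Implicit. Unset Printing Implicit Defensive.
Import Order.TTheory GRing.Theory Num.Theory.
Local Open Scope classical_set_scope.
Local Open Scope ring_scope.

Definition homeo (A : topologicalType) (f : A -> A) : Prop :=
  continuous f /\ exists g : A -> A, continuous g /\ cancel f g /\ cancel g f.

Definition homeo_subgroup (A : topologicalType) (G : set (A -> A)) : Prop :=
  [/\ (forall f, G f -> homeo f),
      G id,
      (forall f g, G f -> G g -> G (f \o g)) &
      (forall f, G f -> exists2 g, G g & cancel f g /\ cancel g f)].

Definition invariant (A : topologicalType) (G : set (A -> A)) (Y : set A) : Prop :=
  Y !=set0 /\ forall g y, G g -> Y y -> Y (g y).

Definition has_chain (A : topologicalType) (G : set (A -> A)) (n : nat) : Prop :=
  exists Y : nat -> set A,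
    [/\ (forall i, (i <= n)%N -> closed (Y i) /\ invariant G (Y i)),
        (forall i, (i < n)%N -> Y i `<` Y i.+1) &
        Y n = setT].

Definition height (A : topologicalType) (G : set (A -> A)) : \bar Rdefinitions.R :=
  ereal_sup [set ((n%:R : Rdefinitions.R)%:E) | n in [set n | has_chain G n]].

Definition P_h (A : topologicalType) : set (\bar Rdefinitions.R) :=
  [set @height A G | G in [set G | @homeo_subgroup A G]].

(* Main.v *)
Require Import Defs.
From mathcomp Require Import all_boot all_order all_algebra.
From mathcomp Require Import all_classical all_reals topology ereal.
From mathcomp Require Import Rstruct.
Import Order.TTheory GRing.Theory Num.Theory.
Local Open Scope classical_set_scope.

Section S.
Variable A : topologicalType.

Lemma sup_pinfty (S : set nat) : (forall n, exists2 m, S m & (n <= m)%N) ->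
  ereal_sup [set ((n%:R : Rdefinitions.R)%:E) | n in S] = +oo%E.
Proof.
move=> H.
have ub := @ereal_sup_ubound _ [set ((n%:R : Rdefinitions.R)%:E) | n in S].
have key : forall n, ((n%:R : Rdefinitions.R)%:E <= ereal_sup [set ((n%:R : Rdefinitions.R)%:E) | n in S])%E.
  move=> n; have [m Sm nm] := H n.
  apply: (le_trans _ (ub _ _)); last by exists m.
  by rewrite lee_fin ler_nat.
move: key; case: (ereal_sup _) => // [r|] key.
- have := key (Num.truncn r).+1; rewrite lee_fin => h.
  have := truncnS_gt r; by rewrite ltNge h.
- by have := key 0%N.
Qed.


Lemma id_subgroup : homeo_subgroup [set (@id A)].
Proof.
split.
- move=> f ->; split; first by move=> ? ?.
  by exists id; split => //; by move=> ? ?.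
- by [].
- by move=> f g -> ->.
- by move=> f ->; exists id.
Qed.

Lemma id_chain (hA : hausdorff_space A) (x : nat -> A) : injective x ->
  forall n, has_chain [set (@id A)] n.
Proof.
move=> xinj n.
pose Z i := [set y | exists2 j, (j <= i)%N & y = x j].
have Zfin i : finite_set (Z i).
  have -> : Z i = x @` [set j | (j <= i)%N].
    apply/seteqP; split=> y /=.
      by case=> j ji ->; exists j.
    by case=> j ji <-; exists j.
  apply: finite_image.
  have -> : [set j | (j <= i)%N] = `I_i.+1 by apply/seteqP; split=> j.
  exact: finite_II.
have Zcl i : closed (Z i).
  exact: (proj1 (@accessible_finite_set_closed A) (hausdorff_accessible hA)).
exists (fun i => if (i < n)%N then Z i else setT); split.
- move=> i ilen; case: ifP => _.
    split => //; split; first by exists (x i); exists i.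
    by move=> g y -> .
  split; first exact: closedT.
  by split; [exists (x 0%N)|].
- move=> i iltn; rewrite iltn; case: ifP => hi.
    split; first by move=> y [j ji ->]; exists j => //; exact: leqW.
    move=> /(_ (x i.+1)) h; have [|j ji /xinj eji] := h; first by exists i.+1.
    by move: ji; rewrite -eji ltnn.
  split => //.
  move=> /(_ (x i.+1) I) [j ji /xinj eji].
  by move: ji; rewrite -eji ltnn.
- by rewrite ltnn.
Qed.


Lemma chain_card (G : set (A -> A)) n : has_chain G n -> (`I_n #<= [set: A])%card.
Proof.
case=> Y [Hc Hs Hn].
have [a _] : Y n !=set0 by case: (Hc n (leqnn n)) => _ [].
have mono : forall i j, (i <= j)%N -> (j <= n)%N -> Y i `<=` Y j.
  move=> i j; elim: j => [|j IH]; first by rewrite leqn0 => /eqP -> _.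
  rewrite leq_eqVlt => /orP[/eqP -> _ //|]; rewrite ltnS => ij jn.
  apply: subset_trans (IH ij (ltnW jn)) _; exact: properW (Hs _ jn).
have ex : forall i, exists y, (i < n)%N -> Y i.+1 y /\ ~ Y i y.
  move=> i; case: (ltnP i n) => [iltn|]; last by exists a.
  have [sub nsub] := Hs i iltn.
  apply: contrapT => h; apply: nsub => y Yy.
  apply: contrapT => nY; apply: h; exists y => _; by split.
have [f Hf] := choice ex.
have finj : {in `I_n &, injective f}.
  have key : forall i j, (i < j)%N -> (j < n)%N -> f i <> f j.
    move=> i j ij jn eq.
    have [Yi _] := Hf i (ltn_trans ij jn).
    have [_ nYj] := Hf j jn.
    apply: nYj; rewrite -eq; apply: (mono i.+1) => //; exact: ltnW.
  move=> i j; rewrite !inE /= => iI jI eq.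
  case: (ltngtP i j) => // [ij|ji]; first by case: (key _ _ ij jI).
  by case: (key _ _ ji iI).
rewrite -(card_le_eql (inj_card_eq finj)).
exact: subset_card_le.
Qed.


Lemma inf_inj : infinite_set [set: A] -> exists x : nat -> A, injective x.
Proof.
move=> /infiniteP /card_leP [f].
pose g (n : nat) : A := val (f (exist _ n (in_setT n))).
exists g => m n /= h.
have := @inj _ _ _ f (exist _ m (in_setT m)) (exist _ n (in_setT n)).
rewrite !in_setT => /(_ isT isT).
move=> H. have := H (val_inj h). by case.
Qed.

End S.

Theorem lemma2p2 (A : topologicalType) (hA : hausdorff_space A) :
  P_h A +oo%E <-> infinite_set [set: A].
Proof.
split.
- case=> G _ hG [k Hk].
  have : (height G <= (k%:R : Rdefinitions.R)%:E)%E.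
    apply: ge_ereal_sup => _ [n /chain_card cn <-].
    rewrite lee_fin ler_nat -card_le_II.
    by rewrite -(card_le_eqr Hk).
  by rewrite hG.
- move=> /inf_inj [x xinj].
  exists [set id]; first exact: id_subgroup.
  apply: sup_pinfty => n; exists n => //.
  exact: (@id_chain A hA x xinj n).
Qed.
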